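(* Let $A\in\mathbb{R}^{n\times n}$ and $\alpha>0$ be given, and consider the linear system $\dot x=Ax$, $x\in\mathbb{R}^n$. The system is stable if there exists a symmetric positive definite matrix $P\in\mathbb{R}^{n\times n}$ such that at least one of the following conditions holds: 1) for some $\beta\ge1$ with either $\beta=1$, or $\beta>1$ and $\mathrm{trace}(A)\le0$: $A^{\rm T}P+PA-\frac{1}{\alpha}\frac{\beta-1}{\beta+1}\mathrm{trace}(A)P<0$; 2) $A^{\rm T}P+PA-\frac{1}{\alpha}\mathrm{trace}(A)P<0$ and $A^{\rm T}P+PA+\frac{1}{\alpha}\mathrm{trace}(A)P<0$.
   Context: Matrix inequalities $M<0$ mean that the symmetric matrix $M$ is negative definite. Stability is in the sense of Lyapunov. *)

(* Defs.v *)
From HB Require Import structures.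
From mathcomp Require Import all_boot all_order all_algebra.
From mathcomp Require Import all_classical all_reals all_analysis.
Set Implicit Arguments. Unset Strict Implicit. Unset Printing Implicit Defensive.
Import Order.TTheory GRing.Theory Num.Theory.
Import numFieldNormedType.Exports.
Local Open Scope ring_scope.

Definition posdef {R : realType} {n : nat} (M : 'M[R]_n) : Prop :=
  M^T = M /\ forall x : 'cV[R]_n, x != 0 -> 0 < (x^T *m M *m x) 0 0.

Definition negdef {R : realType} {n : nat} (M : 'M[R]_n) : Prop :=
  M^T = M /\ forall x : 'cV[R]_n, x != 0 -> (x^T *m M *m x) 0 0 < 0.

Definition lin_solution {R : realType} {n : nat} (A : 'M[R]_n)
    (x : R -> 'cV[R]_n) : Prop :=
  forall t : R, is_derive t 1 x (A *m x t).

Definition lyap_stable {R : realType} {n : nat} (A : 'M[R]_n) : Prop :=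
  forall eps : R, 0 < eps -> exists2 delta : R, 0 < delta &
    forall x : R -> 'cV[R]_n, lin_solution A x ->
      `|x 0| < delta -> forall t : R, 0 <= t -> `|x t| < eps.

(* Main.v *)
Require Import Defs.
From HB Require Import structures.
From mathcomp Require Import all_boot all_order all_algebra.
From mathcomp Require Import all_classical all_reals all_analysis.
From mathcomp Require Import ring lra.
Import Order.TTheory GRing.Theory Num.Theory.
Import numFieldNormedType.Exports.
Local Open Scope ring_scope.
Section S.
Local Open Scope classical_set_scope.
Context {R : realType}.

Definition qf {n} (P : 'M[R]_n) (x : 'cV[R]_n) : R := (x^T *m P *m x) 0 0.

Lemma qfE n (P : 'M[R]_n) x :
  qf P x = \sum_j (\sum_i x i 0 * P i j) * x j 0.
Proof.
rewrite /qf !mxE; apply: eq_bigr => j _; rewrite !mxE; congr (_ * _).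
by apply: eq_bigr => i _; rewrite !mxE.
Qed.

Lemma qfZ n (P : 'M[R]_n) k x : qf P (k *: x) = k ^+ 2 * qf P x.
Proof.
rewrite /qf linearZ /= [(k *: x)^T]linearZ /= -scalemxAl -scalemxAl scalerA mxE expr2.
by [].
Qed.

Lemma norm_trmx_le m p (x : 'M[R]_(m, p)) : `|x^T| <= `|x|.
Proof.
rewrite [leLHS]/Num.Def.normr/= mx_normrE.
apply: bigmax_le => // -[i j] _ /=; rewrite mxE.
rewrite [leRHS]/Num.Def.normr/= mx_normrE.
exact: (le_bigmax _ (fun ij : 'I_m * 'I_p => `|x ij.1 ij.2|) (j, i)).
Qed.

Lemma norm_trmx m p (x : 'M[R]_(m, p)) : `|x^T| = `|x|.
Proof.
apply/le_anti/andP; split; first exact: norm_trmx_le.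
by rewrite -{1}(trmxK x); exact: norm_trmx_le.
Qed.

Lemma qf_cont n (P : 'M[R]_n) : continuous (fun y : 'rV[R]_n => qf P y^T).
Proof.
have -> : (fun y : 'rV[R]_n => qf P y^T) =
   (fun y => \sum_j (\sum_i y 0 i * P i j) * y 0 j).
  by apply: funext => y; rewrite qfE; apply: eq_bigr => j _; rewrite !mxE;
   congr (_ * _); apply: eq_bigr => i _; rewrite mxE.
apply: continuous_big => [|j _]; first exact: add_continuous.
move=> y; apply: continuousM; last exact: coord_continuous.
apply: continuous_big => [|i _]; first exact: add_continuous.
move=> z; apply: continuousM; first exact: coord_continuous.
exact: cst_continuous.
Qed.


Lemma qf_bounds n (P : 'M[R]_n) (HP : posdef P) :
  exists m K : R, [/\ 0 < m, 0 < K &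
    forall x, m * `|x| ^+ 2 <= qf P x /\ qf P x <= K * `|x| ^+ 2].
Proof.
move: HP => [_ Ppos].
case: n P Ppos => [|k] P Ppos.
  exists 1, 1; split => // x; rewrite (flatmx0 x) /qf !mxE big_ord0 normr0.
  by rewrite expr2 !mul0r.
pose S := [set y : 'rV[R]_k.+1 | `|y| = 1]%classic.
have S0 : S !=set0.
  exists (const_mx 1); rewrite /S /=.
  apply/le_anti/andP; split.
    rewrite [leLHS]/Num.Def.normr/= mx_normrE.
    by apply: bigmax_le => // -[i j] _ /=; rewrite mxE normr1.
  rewrite [leRHS]/Num.Def.normr/= mx_normrE.
  apply: le_trans (le_bigmax _ _ (ord0, ord0)) => /=.
  by rewrite mxE normr1.
have cS : compact S.
  apply: bounded_closed_compact.
    exists 1; split => // M M1 y /= ->; exact: ltW.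
  have -> : S = (fun y : 'rV[R]_k.+1 => `|y|) @^-1` [set 1] by [].
  apply: preimage_closed; last exact: closed_eq.
  by move=> y _; exact: norm_continuous.
have cf : {within S, continuous (fun y : 'rV[R]_k.+1 => qf P y^T)}.
  exact: (@continuous_subspaceT _ _ S _ (@qf_cont _ P)).
have [c cS' cmin] := compact_EVT_min S0 cS cf.
have [d dS' dmax] := compact_EVT_max S0 cS cf.
have c1 : `|c| = 1 by move: cS'; rewrite inE.
have c0 : c^T != 0.
  apply/eqP => /(congr1 trmx); rewrite trmxK trmx0 => c0.
  by move: c1; rewrite c0 normr0 => /eqP; rewrite eq_sym oner_eq0.
have mpos : 0 < qf P c^T by exact: Ppos.
exists (qf P c^T), (qf P d^T); split => //; first exact: lt_le_trans mpos (dmax _ cS').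
move=> x; have [->|x0] := eqVneq x 0.
  by rewrite /qf normr0 expr2 !mulr0 mulmx0 !mxE; split.
have nx : 0 < `|x| by rewrite normr_gt0.
pose y := `|x|^-1 *: x^T.
have yS : y \in S.
  rewrite inE /S /= /y normrZ norm_trmx normfV normr_id mulVf //.
  by rewrite gt_eqF.
have qy : qf P y^T = `|x|^-2 * qf P x.
  by rewrite /y [(_ *: _)^T]linearZ /= trmxK qfZ exprVn.
have ->: qf P x = `|x| ^+ 2 * qf P y^T.
  by rewrite qy mulrA mulfV ?mul1r // expf_neq0 // gt_eqF.
split.
  by rewrite mulrC ler_pM2l ?exprn_gt0 //; exact: cmin.
by rewrite mulrC ler_pM2r ?exprn_gt0 //; exact: dmax.
Qed.


Lemma bilE n (P : 'M[R]_n) (u v : 'cV[R]_n) :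
  (u^T *m P *m v) 0 0 = \sum_j (\sum_i u i 0 * P i j) * v j 0.
Proof.
rewrite !mxE; apply: eq_bigr => j _; rewrite !mxE; congr (_ * _).
by apply: eq_bigr => i _; rewrite !mxE.
Qed.

Lemma is_derive_sum' n (h : 'I_n -> R -> R) (t : R) (dh : 'I_n -> R) :
  (forall i, is_derive t 1 (h i) (dh i)) ->
  is_derive t 1 (fun s => \sum_i h i s) (\sum_i dh i).
Proof.
move=> H.
have -> : (fun s => \sum_i h i s) = \sum_i h i.
  by apply: funext => s; rewrite fct_sumE.
exact: is_derive_sum.
Qed.

Lemma is_deriveM' (f g : R -> R) (t : R) (df dg : R) :
  is_derive t 1 f df -> is_derive t 1 g dg ->
  is_derive t 1 (fun s => f s * g s) (f t * dg + g t * df).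
Proof.
move=> Hf Hg; have := is_deriveM Hf Hg; by [].
Qed.

Lemma qf_deriv n (P A : 'M[R]_n) (x : R -> 'cV[R]_n) (t : R) :
  lin_solution A x ->
  is_derive t 1 (fun s => qf P (x s)) (qf (A^T *m P + P *m A) (x t)).
Proof.
move=> Hx.
have dx i : is_derive t 1 (fun s => x s i 0) ((A *m x t) i 0).
  have Ht := Hx t.
  have dv : derivable x t 1 by exact: ex_derive.
  apply: DeriveDef; first by move: dv => /derivable_mxP; apply.
  have := derive_mx dv; rewrite derive_val => E.
  have := congr1 (fun M : 'cV[R]_n => M i 0) E.
  by rewrite [in X in _ = X -> _]mxE => ->.
have H : is_derive t 1 (fun s => qf P (x s))
   (\sum_j ((\sum_i x t i 0 * P i j) * (A *m x t) j 0 +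
             x t j 0 * (\sum_i (x t i 0 * 0 + P i j * (A *m x t) i 0)))).
  have -> : (fun s => qf P (x s)) =
     (fun s => \sum_j (\sum_i x s i 0 * P i j) * x s j 0).
    by apply: funext => s; rewrite qfE.
  apply: (@is_derive_sum' _ (fun j s => (\sum_i x s i 0 * P i j) * x s j 0)) => j.
  apply: (@is_deriveM' (fun s => \sum_i x s i 0 * P i j) (fun s => x s j 0)); try exact: dx.
  apply: (@is_derive_sum' _ (fun i s => x s i 0 * P i j)) => i.
  apply: (@is_deriveM' (fun s => x s i 0) (fun _ => P i j)); try exact: dx.
  all: try exact: is_derive_cst.
apply: is_derive_eq H _.
rewrite big_split /=.
have -> : \sum_j x t j 0 * (\sum_i (x t i 0 * 0 + P i j * (A *m x t) i 0))
  = ((A *m x t)^T *m P *m x t) 0 0.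
  rewrite bilE; apply: eq_bigr => j _; rewrite mulrC; congr (_ * _).
  by apply: eq_bigr => i _; rewrite mulr0 add0r mulrC.
have -> : \sum_j (\sum_i x t i 0 * P i j) * (A *m x t) j 0
  = ((x t)^T *m P *m (A *m x t)) 0 0 by rewrite bilE.
rewrite /qf mulmxDr mulmxDl [in RHS]mxE addrC; congr (_ + _).
  by rewrite trmx_mul !mulmxA.
by rewrite !mulmxA.
Qed.


Lemma qfD n (M N : 'M[R]_n) x : qf (M + N) x = qf M x + qf N x.
Proof. by rewrite /qf mulmxDr mulmxDl mxE. Qed.

Lemma qfZM n (M : 'M[R]_n) c x : qf (c *: M) x = c * qf M x.
Proof. by rewrite /qf -scalemxAr -scalemxAl mxE. Qed.

Lemma qfB n (M N : 'M[R]_n) c x : qf (M - c *: N) x = qf M x - c * qf N x.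
Proof. by rewrite -scaleNr qfD qfZM mulNr. Qed.

Lemma qf0 n (M : 'M[R]_n) : qf M 0 = 0.
Proof. by rewrite /qf mulmx0 mxE. Qed.

End S.

Theorem theorem2p4 (R : realType) (n : nat) (A : 'M[R]_n) (alpha : R) :
  0 < alpha ->
  (exists P : 'M[R]_n, posdef P /\
    ((exists beta : R, 1 <= beta /\ (beta = 1 \/ (1 < beta /\ \tr A <= 0)) /\
        negdef (A^T *m P + P *m A
                - (alpha^-1 * ((beta - 1) / (beta + 1)) * \tr A) *: P))
     \/
     (negdef (A^T *m P + P *m A - (alpha^-1 * \tr A) *: P) /\
      negdef (A^T *m P + P *m A + (alpha^-1 * \tr A) *: P)))) ->
  lyap_stable A.
Proof.
move=> alpha0 [P [Ppos Hc]].
have Ppos' := Ppos; move: Ppos' => [_ Pp].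
have Qle : forall x, qf (A^T *m P + P *m A) x <= 0.
  move=> x; have [->|x0] := eqVneq x 0; first by rewrite qf0.
  have px : 0 < qf P x by exact: Pp.
  case: Hc => [[beta [b1 [bc [_ Hn]]]]|[[_ H1] [_ H2]]].
    have := Hn x x0; rewrite -/(qf _ x) qfB.
    set c := alpha^-1 * _ * _.
    have c0 : c <= 0.
      rewrite /c; case: bc => [->|[b1' tr0]]; first by rewrite subrr mul0r mulr0 mul0r.
      have a0 : 0 <= alpha^-1 by rewrite invr_ge0 ltW.
      have bb : 0 <= (beta - 1) / (beta + 1).
        by rewrite divr_ge0 // ?subr_ge0 // addr_ge0 // (le_trans _ b1).
      apply: mulr_ge0_le0 => //; exact: mulr_ge0.
    move=> h; nra.
  have h1 := H1 x x0; rewrite -/(qf _ x) qfB in h1.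
  have h2 := H2 x x0; rewrite -/(qf _ x) (@qfD _ _ (A^T *m P + P *m A)) qfZM in h2.
  lra.
have [m [K [m0 K0 bnd]]] := @qf_bounds _ _ P Ppos.
move=> eps eps0.
pose d := eps * m / (m + K).
have mK : 0 < m + K by rewrite addr_gt0.
have dE : d * (m + K) = eps * m by rewrite /d divfK // gt_eqF.
have d0 : 0 < d by rewrite /d divr_gt0 // mulr_gt0.
exists d => // x sol x0lt t t0.
have dV (s : R) : is_derive s 1 (fun s => qf P (x s)) (qf (A^T *m P + P *m A) (x s)).
  exact: qf_deriv.
have mono : qf P (x t) <= qf P (x 0).
  have := @ler0_derive1_le_cc R (fun s => qf P (x s)) 0 t.
  apply.
  - move=> s _; exact: ex_derive.
  - by move=> s _; rewrite derive1E derive_val.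
  - apply: continuous_subspaceT => s.
    apply: differentiable_continuous; apply/derivable1_diffP; exact: ex_derive.
  - by rewrite in_itv /= lexx t0.
  - by rewrite in_itv /= lexx t0.
  - exact: t0.
have [b1 _] := bnd (x t).
have [_ b2] := bnd (x 0).
set u := `|x t| in b1 *. set w := `|x 0| in b2 x0lt.
have u0 : 0 <= u by exact: normr_ge0.
have w0 : 0 <= w by exact: normr_ge0.
have Kd : K * d <= eps * m by nra.
have de : d <= eps by nra.
have wd : w ^+ 2 < d ^+ 2 by rewrite !expr2; nra.
have h1 : K * w ^+ 2 < K * d ^+ 2 by rewrite ltr_pM2l.
have h2 : K * d ^+ 2 <= m * eps ^+ 2.
  rewrite expr2 mulrA; apply: (le_trans (ler_wpM2r (ltW d0) Kd)).
  have : eps * m * d <= eps * m * eps by rewrite ler_pM2l ?mulr_gt0.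
  move=> H; apply: (le_trans H).
  have -> : eps * m * eps = m * eps ^+ 2 by rewrite expr2; ring.
  by [].
have h3 : m * u ^+ 2 < m * eps ^+ 2 by lra.
rewrite ltNge; apply/negP => ue.
have e2 : eps ^+ 2 <= u ^+ 2 by rewrite !expr2; nra.
have := ler_wpM2l (ltW m0) e2; lra.
Qed.
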